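(* Let $k\ge1$ and let $\sigma=\sigma_1\sigma_2\cdots\sigma_k\in\mathfrak S_k$ be a consecutive pattern. Let $1\text{-}\sigma$ denote the generalized pattern $1\text{-}(\sigma_1+1)(\sigma_2+1)\cdots(\sigma_k+1)$ of length $k+1$. Then, as formal power series, $$A_{1\text{-}\sigma}(z)=\exp\left(\int_0^z A_\sigma(t)\,dt\right).$$
   Context: $\mathfrak S_n$ is the symmetric group on $\{1,\dots,n\}$, permutations written in one-line notation $\pi=\pi_1\cdots\pi_n$. A generalized pattern of length $m$ is a permutation $\sigma_1\cdots\sigma_m\in\mathfrak S_m$ together with, for each $j=1,\dots,m-1$, a choice of either inserting a dash ''-'' between $\sigma_j$ and $\sigma_{j+1}$ or not; write it $\sigma_1\varepsilon_1\sigma_2\cdots\varepsilon_{m-1}\sigma_m$ with each $\varepsilon_j$ either ''-'' or empty. A permutation $\pi\in\mathfrak S_n$ contains this pattern if there are indices $i_1<\dots<i_m$ such that (i) whenever $\varepsilon_j$ is empty, $i_{j+1}=i_j+1$, and (ii) for all $a,b$, $\pi_{i_a}<\pi_{i_b}$ iff $\sigma_a<\sigma_b$. Otherwise $\pi$ avoids it. A consecutive pattern is one with no dashes (an occurrence must occupy adjacent positions). For a generalized pattern $\sigma$, $\alpha_n(\sigma)$ is the number of permutations in $\mathfrak S_n$ avoiding $\sigma$ (with $\alpha_0(\sigma)=1$ for the empty permutation), and $A_\sigma(z)=\sum_{n\ge0}\alpha_n(\sigma)z^n/n!$ is its exponential generating function. *)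

(* Defs.v *)
From mathcomp Require Import all_boot all_order all_fingroup all_algebra.
Set Implicit Arguments. Unset Strict Implicit. Unset Printing Implicit Defensive.
Import GRing.Theory Num.Theory.

(* A generalized pattern of length m: a permutation sg : 'S_m (one-line
   notation sg_j = sg j, positions 0-indexed) together with [adj], where
   [adj j = true] means there is NO dash between positions j and j+1
   (so the occurrence must use adjacent positions there). *)

Definition contains (n m : nat) (pi : 'S_n) (sg : 'S_m) (adj : nat -> bool) : bool :=
  [exists f : {ffun 'I_m -> 'I_n},
    [forall a : 'I_m, forall b : 'I_m,
      [&& (a < b) ==> (f a < f b),
          ((b == a.+1 :> nat) && adj a) ==> (val (f b) == (f a).+1) &
          (pi (f a) < pi (f b)) == (sg a < sg b)]]].

Definition alpha (m : nat) (sg : 'S_m) (adj : nat -> bool) (n : nat) : nat :=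
  #|[set pi : 'S_n | ~~ contains pi sg adj]|.

Definition consec_adj : nat -> bool := fun _ => true.

(* the pattern 1-(sg_1+1)...(sg_k+1): a dash only between positions 0 and 1 *)
Definition one_dash_adj : nat -> bool := fun j => j != 0.

Definition one_dash_fun (k : nat) (s : 'S_k) (i : 'I_k.+1) : 'I_k.+1 :=
  if unlift ord0 i is Some j then lift ord0 (s j) else ord0.

Lemma one_dash_inj (k : nat) (s : 'S_k) : injective (one_dash_fun s).
Proof.
move=> i j; rewrite /one_dash_fun.
case: (unliftP ord0 i) => [i' -> | ->]; case: (unliftP ord0 j) => [j' -> | ->] //;
  rewrite ?liftK ?unlift_none //.
by move/lift_inj/perm_inj ->.
Qed.

Definition one_dash (k : nat) (s : 'S_k) : 'S_k.+1 := perm (@one_dash_inj k s).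

Local Open Scope ring_scope.

Definition fps := nat -> rat.
Definition fps_one : fps := fun n => (n == 0)%:R.
Definition fps_mul (F G : fps) : fps :=
  fun n => \sum_(i < n.+1) F i * G (n - i)%N.
Definition fps_pow (F : fps) (j : nat) : fps := iter j (fps_mul F) fps_one.
Definition fps_int (F : fps) : fps :=
  fun n => if n is m.+1 then F m / (m.+1)%:R else 0.
(* exp(F) = sum_j F^j / j!, for F with zero constant term (then the
   coefficient of z^n only receives contributions from j <= n). *)
Definition fps_exp (F : fps) : fps :=
  fun n => \sum_(j < n.+1) fps_pow F j n / (j`!)%:R.
Definition egf (a : nat -> nat) : fps := fun n => (a n)%:R / (n`!)%:R.

(* Main.v *)
Require Import Defs.
From mathcomp Require Import all_boot all_order all_fingroup all_algebra.
From mathcomp Require Import zify ring.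
From Stdlib Require Import FunctionalExtensionality.
Set Implicit Arguments. Unset Strict Implicit. Unset Printing Implicit Defensive.
Import GRing.Theory Num.Theory.

Definition seqOf n (pi : 'S_n) : seq nat :=
  mkseq (fun i => oapp (fun j : 'I_n => val (pi j)) 0 (insub i)) n.

Lemma size_seqOf n (pi : 'S_n) : size (seqOf pi) = n.
Proof. by rewrite size_mkseq. Qed.

Lemma nth_seqOf n (pi : 'S_n) (i : 'I_n) : nth 0 (seqOf pi) i = pi i.
Proof.
rewrite nth_mkseq //; case: insubP => [j _ hj|] /=; last by rewrite ltn_ord.
by congr (val (pi _)); apply: val_inj.
Qed.

Lemma seqOf_perm n (pi : 'S_n) : perm_eq (seqOf pi) (iota 0 n).
Proof.
apply: uniq_perm; last first.
- move=> x; rewrite mem_iota add0n /=; apply/idP/idP.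
    by move/(nthP 0) => [i]; rewrite size_seqOf => hi <-; rewrite (nth_seqOf pi (Ordinal hi)).
  move=> hx; apply/(nthP 0); exists (val ((pi^-1)%g (Ordinal hx))); first by rewrite size_seqOf; exact: ltn_ord.
  by rewrite (nth_seqOf pi ((pi^-1)%g (Ordinal hx))) permKV.
- exact: iota_uniq.
apply/(uniqP 0) => i j; rewrite !inE size_seqOf => hi hj.
by rewrite (nth_seqOf pi (Ordinal hi)) (nth_seqOf pi (Ordinal hj)) => /val_inj /perm_inj [].
Qed.

Lemma alpha_count m (sg : 'S_m) adj (P : pred (seq nat)) n :
  (forall pi : 'S_n, contains pi sg adj = P (seqOf pi)) ->
  alpha sg adj n = count (predC P) (permutations (iota 0 n)).
Proof.
move=> hP; rewrite /alpha unlock /= size_filter -enumT.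
rewrite (eq_count (a2 := predC P \o (@seqOf n))); last first.
  by move=> pi; rewrite /= inE hP.
rewrite -count_map; apply/seq.permP; apply: uniq_perm.
- rewrite map_inj_uniq ?enum_uniq // => p1 p2 e; apply/permP => i; apply: val_inj.
  have h1 := nth_seqOf p1 i; have h2 := nth_seqOf p2 i; rewrite e in h1; exact: (etrans (esym h1) h2).
- exact: permutations_uniq.
move=> t; rewrite mem_permutations; apply/mapP/idP => [[pi _ ->]|ht].
  exact: seqOf_perm.
have hs : size t = n by rewrite (perm_size ht) size_iota.
have hlt : forall i : 'I_n, nth 0 t i < n.
  move=> i; have : nth 0 t i \in iota 0 n by rewrite -(perm_mem ht) mem_nth // hs.
  by rewrite mem_iota.
have ut : uniq t by rewrite (perm_uniq ht) iota_uniq.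
have inj : injective (fun i : 'I_n => Ordinal (hlt i)).
  move=> i j [] /eqP; rewrite nth_uniq ?hs // => /eqP; exact: val_inj.
exists (perm inj); first by rewrite mem_enum.
apply: (@eq_from_nth _ 0); rewrite ?size_seqOf // => i; rewrite ?hs => hi.
by have := nth_seqOf (perm inj) (Ordinal hi); rewrite permE /= => ->.
Qed.

Section Pat.
Variable k : nat.
Variable s : 'S_k.

Definition win (t : seq nat) (i : nat) : bool :=
  (i + k <= size t) &&
  [forall a : 'I_k, forall b : 'I_k, (nth 0 t (i + a) < nth 0 t (i + b)) == (s a < s b)].

Definition occS (t : seq nat) : bool := has (win t) (iota 0 (size t).+1).

Definition low (t : seq nat) (p i : nat) : bool :=
  [forall a : 'I_k, nth 0 t p < nth 0 t (i + a)].

Definition occ1 (t : seq nat) : bool :=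
  has (fun i => win t i && has (fun p => low t p i) (iota 0 i)) (iota 0 (size t).+1).

Lemma occSP t : reflect (exists i, win t i) (occS t).
Proof.
apply: (iffP hasP) => [[i _ h]|[i h]]; first by exists i.
exists i => //; rewrite mem_iota add0n ltnS; move: h => /andP[h _]; lia.
Qed.

Lemma occ1P t : reflect (exists p i, [/\ p < i, win t i & low t p i]) (occ1 t).
Proof.
apply: (iffP hasP) => [[i _ /andP[h /hasP[p]]]|[p [i [hp h hl]]]].
  by rewrite mem_iota => /andP[_ hp] hl; exists p, i; split.
exists i; first by rewrite mem_iota ltnS; move: h => /andP[h _]; lia.
by rewrite h; apply/hasP; exists p => //; rewrite mem_iota; lia.
Qed.

Lemma win_catl u v i : i + k <= size u -> win (u ++ v) i = win u i.
Proof.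
move=> h; rewrite /win size_cat h (leq_trans h (leq_addr _ _)) /=.
apply: eq_forallb => a; apply: eq_forallb => b.
by rewrite !nth_cat (leq_trans _ h) ?(leq_trans _ h) // ltn_add2l.
Qed.

Lemma win_catr u v i : win (u ++ v) (size u + i) = win v i.
Proof.
rewrite /win size_cat -addnA leq_add2l; congr (_ && _).
apply: eq_forallb => a; apply: eq_forallb => b.
by rewrite !nth_cat -!addnA !ltnNge !leq_addr /= !addKn.
Qed.

Lemma occ1_cat u m w : (forall x, x \in u ++ w -> m < x) ->
  occ1 (u ++ m :: w) = occ1 u || occS w.
Proof.
move=> hm; apply/occ1P/orP.
  move=> [p [i [hp hw hl]]].
  case: (leqP (i + k) (size u)) => h1.
    left; apply/occ1P; exists p, i; split => //; first by rewrite -(win_catl (m :: w) h1).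
    apply/forallP => a; move/forallP: hl => /(_ a).
    have ha := ltn_ord a.
    have e1 : p < size u by lia.
    have e2 : i + a < size u by lia.
    by rewrite !nth_cat e1 e2.
  case: (ltnP (size u) i) => h2.
    right; apply/occSP; exists (i - (size u).+1).
    have hi : i = size u + (1 + (i - (size u).+1)) by lia.
    by rewrite -(win_catr [:: m] w); rewrite hi win_catr in hw.
  exfalso; have hk : size u - i < k by lia.
  move/forallP: hl => /(_ (Ordinal hk)) /=.
  have -> : i + (size u - i) = size u by lia.
  have em : nth 0 (u ++ m :: w) (size u) = m by rewrite nth_cat ltnn subnn.
  rewrite em.
  have hpt : p < size (u ++ m :: w) by move: hw => /andP[hw _]; rewrite size_cat /= in hw *; lia.
  have := mem_nth 0 hpt; rewrite mem_cat inE orbCA => /orP[/eqP ->|hx]; first by rewrite ltnn.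
  have := hm (nth 0 (u ++ m :: w) p); rewrite mem_cat => /(_ hx) h3 h4; by have := ltn_trans h3 h4; rewrite ltnn.
move=> [/occ1P [p [i [hp hw hl]]]|/occSP [i hw]].
  have h1 : i + k <= size u by move: hw => /andP[].
  exists p, i; split => //; first by rewrite win_catl.
  apply/forallP => a; move/forallP: hl => /(_ a).
  have ha := ltn_ord a.
  have e1 : p < size u by lia.
  have e2 : i + a < size u by lia.
  by rewrite !nth_cat e1 e2.
exists (size u), (size u + (1 + i)); split; first lia.
  by rewrite win_catr -cat1s win_catr.
apply/forallP => a.
have e : (size u + (1 + i) + a < size u) = false by rewrite ltnNge -addnA leq_addr.
rewrite !nth_cat ltnn subnn e.
have -> : size u + (1 + i) + a - size u = (i + a).+1 by lia.
rewrite /=; apply: hm; rewrite mem_cat; apply/orP; right; apply: mem_nth.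
by case/andP: hw => hw _; apply: leq_trans hw; rewrite ltn_add2l.
Qed.

Section Map.
Variables (f : nat -> nat) (t : seq nat).
Hypothesis hf : {in t &, forall x y, (f x < f y) = (x < y)}.

Lemma nth_mapf j : j < size t -> nth 0 (map f t) j = f (nth 0 t j).
Proof. by move=> hj; rewrite (nth_map 0). Qed.

Lemma win_map i : win (map f t) i = win t i.
Proof.
rewrite /win size_map; case h: (i + k <= size t) => //=.
apply: eq_forallb => a; apply: eq_forallb => b.
have ha : i + a < size t by have := ltn_ord a; lia.
have hb : i + b < size t by have := ltn_ord b; lia.
by rewrite !nth_mapf // hf // mem_nth.
Qed.

Lemma occS_map : occS (map f t) = occS t.
Proof. by apply/occSP/occSP => -[i h]; exists i; rewrite ?win_map in h *. Qed.

Lemma occ1_map : occ1 (map f t) = occ1 t.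
Proof.
apply/occ1P/occ1P => -[p [i [hp hw hl]]]; exists p, i.
  have hw' : win t i by rewrite -win_map.
  split => //; move: hw' => /andP[hw' _].
  apply/forallP => a; move/forallP: hl => /(_ a).
  have ha : i + a < size t by have := ltn_ord a; lia.
  have hpp : p < size t by have := ltn_ord a; lia.
  by rewrite !nth_mapf ?hf ?mem_nth.
have hw' : win (map f t) i by rewrite win_map.
split => //; move: hw => /andP[hw _].
apply/forallP => a; move/forallP: hl => /(_ a).
have ha : i + a < size t by have := ltn_ord a; lia.
have hpp : p < size t by have := ltn_ord a; lia.
by rewrite !nth_mapf ?hf ?mem_nth.
Qed.
End Map.
End Pat.

Lemma relabel (P : seq nat -> bool) (V : seq nat) :
  (forall (f : nat -> nat) t, {in t &, forall x y, (f x < f y) = (x < y)} -> P (map f t) = P t) ->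
  uniq V -> count P (permutations V) = count P (permutations (iota 0 (size V))).
Proof.
move=> hP uV.
set sV := sort leq V; set n := size V.
have hsz : size sV = n by rewrite size_sort.
have uS : uniq sV by rewrite sort_uniq.
have stS : sorted ltn sV by rewrite ltn_sorted_uniq_leq uS (sort_sorted leq_total).
set g := nth 0 sV; set h := fun x => index x sV.
have hg : forall x, x < n -> h (g x) = x by move=> x hx; rewrite /h /g index_uniq ?hsz.
have gmono : forall x y, x < n -> y < n -> (g x < g y) = (x < y).
  move=> x y hx hy.
  have H := @sorted_ltn_nth _ ltn ltn_trans 0 sV stS.
  case: (ltngtP x y) => hxy.
  - by apply: H; rewrite ?inE ?hsz.
  - by apply/negbTE; rewrite -leqNgt ltnW //; apply: H; rewrite ?inE ?hsz.
  - by rewrite hxy ltnn.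
have eSg : map g (iota 0 n) = sV by rewrite -hsz; exact: mkseq_nth.
have iota_lt : forall t x, perm_eq t (iota 0 n) -> x \in t -> x < n.
  by move=> t x pt; rewrite (perm_mem pt) mem_iota.
rewrite -(seq.permP (perm_permutations (permEl (perm_sort leq V)))) -/sV.
have pe : perm_eq (permutations sV) (map (map g) (permutations (iota 0 n))).
  apply: uniq_perm; first exact: permutations_uniq.
    rewrite map_inj_in_uniq ?permutations_uniq //.
    move=> t1 t2; rewrite !mem_permutations => p1 p2 e.
    have: map h (map g t1) = map h (map g t2) by rewrite e.
    have e1 : map (h \o g) t1 = map id t1 by apply/eq_in_map => x /(iota_lt _ _ p1) /hg.
    have e2 : map (h \o g) t2 = map id t2 by apply/eq_in_map => x /(iota_lt _ _ p2) /hg.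
    by rewrite -!map_comp e1 e2 !map_id.
  move=> x; rewrite mem_permutations; apply/idP/mapP.
    move=> px; exists (map h x).
      have e1 : map (h \o g) (iota 0 n) = map id (iota 0 n).
        by apply/eq_in_map => y; rewrite mem_iota add0n /= => /hg.
      rewrite mem_permutations -[iota 0 n]map_id -e1 map_comp eSg.
      exact: perm_map.
    have e1 : map (g \o h) x = map id x.
      by apply/eq_in_map => y hy /=; rewrite /g /h nth_index // -(perm_mem px).
    by rewrite -map_comp e1 map_id.
  move=> [t]; rewrite mem_permutations => pt ->.
  by rewrite -eSg perm_map.
rewrite (seq.permP pe) count_map; apply: eq_in_count => t.
rewrite mem_permutations => pt /=; apply: hP => x y hx hy.
by apply: gmono; apply: (iota_lt t).
Qed.

Fixpoint splits (R : seq nat) : seq (seq nat * seq nat) :=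
  if R is x :: R' then
    [seq (x :: q.1, q.2) | q <- splits R'] ++ [seq (q.1, x :: q.2) | q <- splits R']
  else [:: ([::], [::])].

Lemma splits_perm R q : q \in splits R -> perm_eq (q.1 ++ q.2) R.
Proof.
elim: R q => [|x R IH] [A B] /=; first by rewrite inE => /eqP [-> ->].
rewrite mem_cat => /orP[] /mapP [[A' B'] /IH h [-> ->]] /=.
  by rewrite perm_cons.
by rewrite -cat1s perm_catCA /= perm_cons.
Qed.

Lemma splits_filter R (p : pred nat) : (filter (predC p) R, filter p R) \in splits R.
Proof.
elim: R => [|x R IH] /=; first by rewrite inE.
rewrite mem_cat; case: (p x) => /=.
  by apply/orP; right; apply/mapP; exists (filter (predC p) R, filter p R).
by apply/orP; left; apply/mapP; exists (filter (predC p) R, filter p R).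
Qed.

Lemma splits_eq R q w : uniq R -> q \in splits R -> perm_eq w q.2 ->
  (filter (predC (mem w)) R, filter (mem w) R) = q.
Proof.
move=> uR hq pw.
have e : filter (mem w) R = filter (mem q.2) R.
  by apply: eq_filter => x; rewrite /= (perm_mem pw).
have e' : filter (predC (mem w)) R = filter (predC (mem q.2)) R.
  by apply: eq_filter => x; rewrite /= (perm_mem pw).
rewrite e e'; case: q hq {pw e e'} => A B /=.
elim: R uR A B => [|x R IH] /=; first by move=> _ A B; rewrite inE => /eqP [-> ->].
move=> /andP[xR uR] A B; rewrite mem_cat => /orP[] /mapP [[A' B'] hq [-> ->]] /=.
  have xB : x \notin B'.
    by apply: contra xR; rewrite -(perm_mem (splits_perm hq)) mem_cat orbC => ->.
  by rewrite xB (negbTE xB); case: (IH uR _ _ hq) => -> ->.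
rewrite inE eqxx /=.
have ee : filter (mem (x :: B')) R = filter (mem B') R.
  apply: eq_in_filter => y yR; rewrite /= inE.
  by case: eqP => // eyx; rewrite -eyx yR in xR.
have ee' : filter (predC (mem (x :: B'))) R = filter (predC (mem B')) R.
  apply: eq_in_filter => y yR; rewrite /= inE.
  by case: eqP => // eyx; rewrite -eyx yR in xR.
by rewrite ee ee'; case: (IH uR _ _ hq) => -> ->.
Qed.

Lemma splits_uniq R : uniq R -> uniq (splits R).
Proof.
elim: R => [|x R IH] //= /andP[xR uR].
rewrite cat_uniq !map_inj_uniq ?IH //; last first.
- by move=> [a b] [c d] /= [-> ->].
- by move=> [a b] [c d] /= [-> ->].
rewrite andbT /=; apply/hasPn => q /mapP [[A B] hq ->] /=.
apply/mapP => -[[A' B'] hq' [eA _]].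
move/perm_mem: (splits_perm hq) => /(_ x); rewrite /= eA mem_cat inE eqxx /=.
by move=> h; rewrite -h in xR.
Qed.

Lemma count_partition (T K : eqType) (P : pred T) (key : T -> K) (keys : seq K) (L : seq T) :
  uniq keys -> {in L, forall t, key t \in keys} ->
  count P L = \sum_(q <- keys) count (fun t => P t && (key t == q)) L.
Proof.
move=> uk; elim: L => [|x L IH] hL /=; first by rewrite big1.
rewrite big_split /= IH; last by move=> t tL; apply: hL; rewrite inE tL orbT.
congr (_ + _).
rewrite (bigD1_seq (key x)) ?hL ?inE ?eqxx //= andbT big1 ?addn0 //.
by move=> q /negbTE; rewrite eq_sym => ->; rewrite andbF.
Qed.

Lemma count_allpairs (S T U : eqType) (f : S -> T -> U) (P : pred U) (P1 : pred S) (P2 : pred T) s t :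
  (forall x y, x \in s -> y \in t -> P (f x y) = P1 x && P2 y) ->
  count P [seq f x y | x <- s, y <- t] = count P1 s * count P2 t.
Proof.
elim: s => [|x s IH] //= h.
rewrite count_cat IH; last by move=> a b ha hb; apply: h; rewrite ?inE ?ha ?orbT.
rewrite mulnDl count_map; congr (_ + _).
rewrite (@eq_in_count _ _ (fun y => P1 x && P2 y)); last first.
  by move=> y yt /=; apply: h; rewrite ?inE ?eqxx.
by case: (P1 x) => /=; rewrite ?mul1n ?mul0n ?count_pred0 //; apply: eq_count.
Qed.

Section Decomp.
Variables (m : nat) (R : seq nat) (P P1 P2 : pred (seq nat)).
Hypothesis uR : uniq (m :: R).
Hypothesis hP : forall u w, perm_eq (u ++ w) R -> P (u ++ m :: w) = P1 u && P2 w.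

Definition key (t : seq nat) :=
  let w := drop (index m t).+1 t in (filter (predC (mem w)) R, filter (mem w) R).

Lemma key_cat u w : m \notin u -> key (u ++ m :: w) = (filter (predC (mem w)) R, filter (mem w) R).
Proof.
move=> mu; rewrite /key index_cat (negbTE mu) /= eqxx addn0.
have -> : u ++ m :: w = (u ++ [:: m]) ++ w by rewrite -catA.
by rewrite drop_size_cat // size_cat addn1.
Qed.

Lemma fiber q : q \in splits R ->
  perm_eq (filter (fun t => key t == q) (permutations (m :: R)))
          [seq u ++ m :: w | u <- permutations q.1, w <- permutations q.2].
Proof.
move=> hq; have /andP[mR uR'] := uR.
apply: uniq_perm.
- by rewrite filter_uniq ?permutations_uniq.
- apply: allpairs_uniq; rewrite ?permutations_uniq //.
  move=> [u1 w1] [u2 w2] /allpairsP [[a b] [ha hb [-> ->]]] /allpairsP [[c d] [hc hd [-> ->]]] /= e.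
  move: ha hc; rewrite !mem_permutations => ha hc.
  move/eqP: e; rewrite eqseq_cat; last by rewrite (perm_size ha) (perm_size hc).
  by case/andP => /eqP -> /eqP [->].
move=> t; rewrite mem_filter mem_permutations; apply/andP/allpairsP.
- move=> [/eqP kt pt].
  have mt : m \in t by rewrite (perm_mem pt) inE eqxx.
  set i := index m t.
  have hi : i < size t by rewrite index_mem.
  have [u [w et]] : exists u w, t = u ++ m :: w.
    exists (take i t), (drop i.+1 t).
    by rewrite -[X in _ ++ X :: _](nth_index 0 mt) -drop_nth // cat_take_drop.
  rewrite et in pt kt *; clear et i hi mt t.
  have puw : perm_eq (u ++ w) R.
    rewrite -(perm_cons m); apply: perm_trans pt; rewrite perm_sym.
    by rewrite -cat1s perm_catCA.
  have uuw : uniq (u ++ w) by rewrite (perm_uniq puw).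
  have mu : m \notin u.
    apply: contra mR => mu; rewrite -(perm_mem puw) mem_cat mu //.
  move: kt; rewrite key_cat // => kq.
  move: (uuw); rewrite cat_uniq => /and3P [uu /hasPn hd uw].
  exists (u, w); split => //=; rewrite -kq /= mem_permutations; apply: uniq_perm => //;
    rewrite ?filter_uniq // => x; rewrite mem_filter /= -(perm_mem puw) mem_cat;
    case xu: (x \in u); case xw: (x \in w) => //=.
  by have := hd x xw; rewrite xu.
- move=> [[u w] [hu hw ->]] /=; move: hu hw; rewrite !mem_permutations => hu hw.
  have puw : perm_eq (u ++ w) R.
    apply: perm_trans (splits_perm hq); exact: perm_cat.
  have mu : m \notin u.
    apply: contra mR => mu; rewrite -(perm_mem puw) mem_cat mu //.
  split.
    by rewrite key_cat // (splits_eq _ hq hw).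
  by rewrite -cat1s perm_catCA /= perm_cons.
Qed.

Lemma decomp :
  count P (permutations (m :: R)) =
  \sum_(q <- splits R) count P1 (permutations q.1) * count P2 (permutations q.2).
Proof.
have /andP[mR uR'] := uR.
rewrite (@count_partition _ _ P key (splits R) _ (splits_uniq uR')); last first.
  move=> t _; exact: (splits_filter R (fun x => x \in drop (index m t).+1 t)).
apply: eq_big_seq => q hq.
rewrite -count_filter (seq.permP (fiber hq)).
apply: count_allpairs => u w; rewrite !mem_permutations => hu hw.
apply: hP; apply: perm_trans (splits_perm hq); exact: perm_cat.
Qed.
End Decomp.

Lemma sum_splits R (F : nat -> nat -> nat) :
  \sum_(q <- splits R) F (size q.1) (size q.2) =
  \sum_(j < (size R).+1) 'C(size R, j) * F (size R - j) j.
Proof.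
elim: R F => [|x R IH] F; first by rewrite big_cons big_nil big_ord1 /= mul1n addn0.
rewrite /= big_cat !big_map /=.
rewrite (IH (fun a b => F a.+1 b)) (IH (fun a b => F a b.+1)).
set n := size R.
rewrite big_ord_recl /= subn0 bin0 mul1n.
rewrite [in RHS]big_ord_recl /= subn0 bin0 mul1n.
have e1 : \sum_(i < n) 'C(n, bump 0 i) * F (n - bump 0 i).+1 (bump 0 i) =
          \sum_(i < n) 'C(n, i.+1) * F (n - i) i.+1.
  by apply: eq_bigr => i _; rewrite /bump /= add1n; congr (_ * F _ _); have := ltn_ord i; lia.
rewrite e1.
have e2 : \sum_(i < n.+1) 'C(n.+1, bump 0 i) * F (n.+1 - bump 0 i) (bump 0 i) =
   \sum_(i < n.+1) 'C(n, i) * F (n - i) i.+1 + \sum_(i < n.+1) 'C(n, i.+1) * F (n - i) i.+1.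
  by rewrite -big_split; apply: eq_bigr => i _; rewrite /bump /= add1n binS mulnDl addnC subSS.
rewrite e2 [X in _ = _ + (_ + X)]big_ord_recr /= bin_small // mul0n addn0.
have e3 : \sum_(i < n) 'C(n, i.+1) * F (n - widen_ord (leqnSn n) i) i.+1 =
          \sum_(i < n) 'C(n, i.+1) * F (n - i) i.+1 by [].
rewrite e3; lia.
Qed.

Lemma consec (g : nat -> nat) lo hi :
  (forall j, lo <= j -> j.+1 < hi -> g j.+1 = (g j).+1) ->
  forall j, lo <= j < hi -> g j = g lo + (j - lo).
Proof.
move=> h j /andP[hl hh]; elim: j hl hh => [|j IH] hl hh.
  by move: hl; rewrite leqn0 => /eqP ->; rewrite subnn addn0.
case: (leqP lo j) => hj.
  by rewrite h // IH //; [lia | lia].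
have -> : lo = j.+1 by lia.
by rewrite subnn addn0.
Qed.

Section Trans.
Variable k : nat.
Variable s : 'S_k.+1.

Lemma contS n (pi : 'S_n) : contains pi s consec_adj = occS s (seqOf pi).
Proof.
apply/existsP/occSP => [[f /forallP H]|[i /andP[hi hw]]].
  set g := fun j => val (f (inord j)).
  have hg : forall j, j < k.+1 -> g j = g 0 + j.
    move=> j hj; rewrite (@consec g 0 k.+1) ?subn0 //.
    move=> j' _ hj'; move/forallP: (H (inord j')) => /(_ (inord j'.+1)).
    rewrite /consec_adj !inordK ?eqxx /=; try lia.
    by case/and3P => _ /eqP e _; exact: e.
  have gf : forall a : 'I_k.+1, val (f a) = g 0 + a.
    by move=> a; rewrite -hg // /g inord_val.
  exists (g 0); apply/andP; split.
    by rewrite size_seqOf; have := ltn_ord (f ord_max); rewrite gf /=; lia.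
  apply/forallP => a; apply/forallP => b.
  move/forallP: (H a) => /(_ b) /and3P [_ _ /eqP <-].
  by rewrite -!gf !nth_seqOf.
rewrite size_seqOf in hi.
have hlt : forall a : 'I_k.+1, i + a < n by move=> a; have := ltn_ord a; lia.
exists [ffun a => Ordinal (hlt a)]; apply/forallP => a; apply/forallP => b.
rewrite !ffunE /=; apply/and3P; split.
- by apply/implyP; rewrite ltn_add2l.
- by apply/implyP => /andP[/eqP -> _]; rewrite addnS.
- move/forallP: hw => /(_ a) /forallP /(_ b).
  by rewrite -(nth_seqOf pi (Ordinal (hlt a))) -(nth_seqOf pi (Ordinal (hlt b))).
Qed.

Lemma od0 : one_dash s ord0 = ord0.
Proof. by rewrite permE /one_dash_fun unlift_none. Qed.

Lemma odl (a : 'I_k.+1) : one_dash s (lift ord0 a) = lift ord0 (s a).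
Proof. by rewrite permE /one_dash_fun liftK. Qed.

Lemma cont1 n (pi : 'S_n) : contains pi (one_dash s) one_dash_adj = occ1 s (seqOf pi).
Proof.
apply/existsP/occ1P => [[f /forallP H]|[p [i [hpi /andP[hi hw] hl]]]].
  set g := fun j => val (f (inord j)).
  have hg : forall j, 0 < j < k.+2 -> g j = g 1 + (j - 1).
    move=> j hj; rewrite (@consec g 1 k.+2) //.
    move=> j' hj1 hj'; move/forallP: (H (inord j')) => /(_ (inord j'.+1)).
    rewrite /one_dash_adj !inordK ?eqxx /=; try lia.
    have -> : (j' != 0) = true by lia.
    by case/and3P => _ /eqP e _; exact: e.
  have gf : forall a : 'I_k.+1, (f (lift ord0 a) : nat) = g 1 + a.
    move=> a; have h := hg (lift ord0 a); rewrite /g inord_val in h; rewrite h lift0 ?subn1 //; have := ltn_ord a; lia.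
  have g0 : (f ord0 : nat) = g 0 by rewrite /g -[0]/(val (@ord0 k.+1)) inord_val.
  have g1 : g 1 = (f (lift ord0 ord0) : nat) by rewrite gf addn0.
  exists (g 0), (g 1); split.
  - move/forallP: (H ord0) => /(_ (lift ord0 ord0)) /and3P [/implyP h _ _].
    by rewrite g1 -g0; apply: h.
  - apply/andP; split.
      by rewrite size_seqOf; have := ltn_ord (f (lift ord0 ord_max)); rewrite gf /=; lia.
    apply/forallP => a; apply/forallP => b.
    move/forallP: (H (lift ord0 a)) => /(_ (lift ord0 b)) /and3P [_ _ /eqP].
    rewrite !odl /= /bump /= !add1n ltnS => <-.
    by rewrite -!gf !nth_seqOf.
  - apply/forallP => a.
    move/forallP: (H ord0) => /(_ (lift ord0 a)) /and3P [_ _ /eqP].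
    rewrite od0 odl /= /bump /= add1n ltn0Sn => h.
    by rewrite -g0 -gf !nth_seqOf h.
rewrite size_seqOf in hi.
have hlt : forall a : 'I_k.+1, i + a < n by move=> a; have := ltn_ord a; lia.
have hp : p < n by lia.
exists [ffun x => if unlift ord0 x is Some a then Ordinal (hlt a) else Ordinal hp].
apply/forallP => x; apply/forallP => y; rewrite !ffunE.
case: (unliftP ord0 x) => [a ->|->]; case: (unliftP ord0 y) => [b ->|->] /=;
  rewrite ?liftK ?unlift_none /= ?od0 ?odl /= /bump /= ?add1n.
- apply/and3P; split.
  + by apply/implyP; rewrite ltnS ltn_add2l.
  + by apply/implyP => /andP[/eqP [->] _]; rewrite addnS.
  + move/forallP: hw => /(_ a) /forallP /(_ b).
    by rewrite ltnS -(nth_seqOf pi (Ordinal (hlt a))) -(nth_seqOf pi (Ordinal (hlt b))).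
- have e1 := nth_seqOf pi (Ordinal (hlt a)); have e2 := nth_seqOf pi (Ordinal hp).
  simpl in e1, e2; rewrite ltn0 -e1 -e2; apply/eqP/negbTE; rewrite -leqNgt.
  by move/forallP: hl => /(_ a) /ltnW.
- have e1 := nth_seqOf pi (Ordinal (hlt b)); have e2 := nth_seqOf pi (Ordinal hp).
  simpl in e1, e2; rewrite -e1 -e2 ltn0Sn; apply/and3P; split.
  + lia.
  + by rewrite /one_dash_adj andbF.
  + by move/forallP: hl => /(_ b) ->.
- by rewrite ltnn.
Qed.
End Trans.
Section FPS.
Local Open Scope ring_scope.

Lemma fps_mulE (F H : fps) (p q : {poly rat}) n :
  (forall i, (i <= n)%N -> F i = p`_i) -> (forall i, (i <= n)%N -> H i = q`_i) ->
  fps_mul F H n = (p * q)`_n.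
Proof.
move=> hF hH; rewrite /fps_mul coefM; apply: eq_bigr => i _.
by rewrite hF ?hH // ?leq_subr // -ltnS.
Qed.

Definition tr (N : nat) (F : fps) : {poly rat} := \poly_(i < N) F i.

Lemma fps_powE (G : fps) N j n : (n < N)%N -> fps_pow G j n = ((tr N G) ^+ j)`_n.
Proof.
elim: j n => [|j IH] n hn.
  by rewrite /fps_pow /= /fps_one expr0 coef1.
rewrite /fps_pow iterS -/(fps_pow G j) exprS.
apply: fps_mulE => i hi.
  by rewrite coef_poly (leq_ltn_trans hi hn).
by rewrite IH // (leq_ltn_trans hi hn).
Qed.

Lemma pow_low (p : {poly rat}) j n : p`_0 = 0 -> (n < j)%N -> (p ^+ j)`_n = 0.
Proof.
move=> h0; elim: j n => [//|j IH] n hn.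
rewrite exprS coefM; apply: big1 => [[i hi]] _ /=.
case: i hi => [|i] hi; first by rewrite h0 mul0r.
by rewrite IH ?mulr0 //; lia.
Qed.

Definition E (G : fps) M N : {poly rat} :=
  \sum_(j < M) ((j`!)%:R)^-1 *: (tr N G) ^+ j.

Lemma sum_trunc (f : nat -> rat) n M : (n < M)%N -> (forall j, (n < j)%N -> f j = 0) ->
  \sum_(j < M) f j = \sum_(j < n.+1) f j.
Proof.
move=> hM hz; rewrite (big_ord_widen M f hM) [RHS]big_mkcond /=; apply: eq_bigr => j _.
by case: ifP => // /negbT; rewrite -leqNgt => h; rewrite hz.
Qed.

Lemma expE (G : fps) M N n : G 0 = 0 -> (n < N)%N -> (n < M)%N ->
  fps_exp G n = (E G M N)`_n.
Proof.
move=> h0 hN hM; rewrite /E coef_sum /fps_exp.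
rewrite (@sum_trunc (fun j => (((j`!)%:R)^-1 *: tr N G ^+ j)`_n) n M hM).
  by apply: eq_bigr => j _; rewrite coefZ (fps_powE _ _ hN) mulrC.
move=> j hj; rewrite coefZ pow_low ?mulr0 //.
by rewrite coef_poly (leq_ltn_trans (leq0n n) hN).
Qed.

Lemma derivE (G : fps) M N :
  (E G M.+1 N)^`() = (tr N G)^`() * E G M N.
Proof.
rewrite /E raddf_sum big_ord_recl /= expr0 derivZ (derivC 1) scaler0 add0r.
rewrite mulr_sumr; apply: eq_bigr => i _.
rewrite derivZ /bump /= add1n deriv_exp /= -scalerAr -scaler_nat scalerA; congr (_ *: _).
rewrite factS natrM; field.
by rewrite pnatr_eq0 -lt0n fact_gt0 /= addrC natr1 pnatr_eq0.
Qed.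

Lemma exp0 (G : fps) : fps_exp G 0 = 1.
Proof. by rewrite /fps_exp big_ord1 /= /fps_one /= divr1. Qed.

Lemma expint_rec (B : fps) n :
  fps_exp (fps_int B) n.+1 *+ n.+1 = \sum_(i < n.+1) B i * fps_exp (fps_int B) (n - i)%N.
Proof.
have h0 : fps_int B 0 = 0 by [].
rewrite (@expE _ n.+2 n.+2) // -coef_deriv derivE coefM; apply: eq_bigr => i _.
rewrite (@expE _ n.+1 n.+2) //; try lia.
congr (_ * _).
rewrite coef_deriv coef_poly /fps_int.
have hi : (i.+1 < n.+2)%N by rewrite !ltnS -ltnS.
rewrite hi -mulr_natr; field. by rewrite addrC natr1 pnatr_eq0.
Qed.


Lemma fact_neq0 m : ((m`!)%:R : rat) != 0.
Proof. by rewrite pnatr_eq0 -lt0n fact_gt0. Qed.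

Lemma egf_step (a b : nat -> nat) n :
  a n.+1 = (\sum_(i < n.+1) 'C(n, i) * b i * a (n - i))%N ->
  egf a n.+1 *+ n.+1 = \sum_(i < n.+1) egf b i * egf a (n - i)%N.
Proof.
move=> ha; rewrite /egf ha natr_sum -[_ *+ n.+1]mulr_natr mulr_suml mulr_suml.
apply: eq_bigr => [[i hi]] _ /=.
have hf := bin_fact (hi : (i <= n)%N).
have hn : ((n.+1)`!%:R : rat) = n.+1%:R * (('C(n, i))%:R * (i`!%:R * (n - i)`!%:R)).
  by rewrite factS -hf !natrM.
rewrite hn !natrM.
have h1 := fact_neq0 i; have h2 := fact_neq0 (n - i).
have h3 : ('C(n, i)%:R : rat) != 0 by rewrite pnatr_eq0 -lt0n bin_gt0.
have h4 : (n.+1%:R : rat) != 0 by rewrite pnatr_eq0.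
field.
by rewrite h1 h2 h3 addrC natr1 h4.
Qed.

Lemma egf_rec (a b : nat -> nat) : a 0 = 1%N ->
  (forall n, a n.+1 = (\sum_(i < n.+1) 'C(n, i) * b i * a (n - i))%N) ->
  egf a = fps_exp (fps_int (egf b)).
Proof.
move=> a0 arec; apply: functional_extensionality => n.
elim: n {-2}n (leqnn n) => [|n IH] m hm.
  by move: hm; rewrite leqn0 => /eqP ->; rewrite exp0 /egf a0 /= divr1.
case: (leqP m n) => [hmn|]; first exact: IH.
move=> hmn; have -> : m = n.+1 by apply/eqP; rewrite eqn_leq hm hmn.
have h4 : (n.+1%:R : rat) != 0 by rewrite pnatr_eq0.
apply: (mulIf h4); rewrite !mulr_natr (egf_step (arec n)) expint_rec.
apply: eq_bigr => [[i hi]] _ /=; rewrite IH //; exact: leq_subr.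
Qed.
End FPS.

Lemma a_count k (s : 'S_k.+1) n :
  alpha (one_dash s) one_dash_adj n = count (predC (occ1 s)) (permutations (iota 0 n)).
Proof. apply: alpha_count => pi; exact: cont1. Qed.

Lemma b_count k (s : 'S_k.+1) n :
  alpha s consec_adj n = count (predC (occS s)) (permutations (iota 0 n)).
Proof. apply: alpha_count => pi; exact: contS. Qed.

Lemma relabel1 k (s : 'S_k.+1) V : uniq V ->
  count (predC (occ1 s)) (permutations V) = alpha (one_dash s) one_dash_adj (size V).
Proof.
move=> uV; rewrite a_count; apply: relabel => // f t hf /=.
by rewrite (occ1_map s hf).
Qed.

Lemma relabelS k (s : 'S_k.+1) V : uniq V ->
  count (predC (occS s)) (permutations V) = alpha s consec_adj (size V).
Proof.
move=> uV; rewrite b_count; apply: relabel => // f t hf /=.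
by rewrite (occS_map s hf).
Qed.

Lemma a_rec k (s : 'S_k.+1) n :
  alpha (one_dash s) one_dash_adj n.+1 =
  (\sum_(i < n.+1) 'C(n, i) * alpha s consec_adj i * alpha (one_dash s) one_dash_adj (n - i))%N.
Proof.
have uR : uniq (0 :: iota 1 n) by rewrite -/(iota 0 n.+1) iota_uniq.
rewrite a_count -/(iota 0 n.+1) /= .
rewrite (@decomp 0 (iota 1 n) (predC (occ1 s)) (predC (occ1 s)) (predC (occS s)) uR); last first.
  move=> u w puw /=; rewrite occ1_cat ?negb_or // => x.
  by rewrite (perm_mem puw) mem_iota; lia.
have e : forall q, q \in splits (iota 1 n) ->
    (count (predC (occ1 s)) (permutations q.1) * count (predC (occS s)) (permutations q.2) =
     alpha (one_dash s) one_dash_adj (size q.1) * alpha s consec_adj (size q.2))%N.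
  move=> q hq; have := perm_uniq (splits_perm hq); rewrite iota_uniq cat_uniq => /and3P[u1 _ u2].
  by rewrite relabel1 // relabelS.
rewrite (eq_big_seq _ e) /=.
rewrite (sum_splits (iota 1 n) (fun x y => alpha (one_dash s) one_dash_adj x * alpha s consec_adj y)%N).
rewrite size_iota; apply: eq_bigr => i _; by rewrite [X in _ * X]mulnC mulnA.
Qed.

Lemma a_zero k (s : 'S_k.+1) : alpha (one_dash s) one_dash_adj 0 = 1%N.
Proof. by rewrite a_count. Qed.

Theorem mainTheorem1 (k : nat) (hk : (0 < k)%N) (s : 'S_k) :
  egf (alpha (one_dash s) one_dash_adj) =
  fps_exp (fps_int (egf (alpha s consec_adj))).
Proof.
case: k hk s => [//|k] _ s.
apply: egf_rec; first exact: a_zero.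
exact: a_rec.
Qed.
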